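(* Let $\mathcal A$ be an NBA and let $R$ be a strict partial order on its states with $R\subseteq\ \subseteq^{\mathrm{di}}$. Then $P(\mathrm{id},R)$ is good for pruning, i.e. $\mathcal L(\mathrm{Prune}(\mathcal A,P(\mathrm{id},R)))=\mathcal L(\mathcal A)$. In particular this holds for $R$ the strict part of direct trace inclusion.
   Context: An NBA is $\mathcal A=(\Sigma,Q,I,F,\delta)$, $\delta\subseteq Q\times\Sigma\times Q$, assumed forward and backward complete. Traces, initial traces (starting in $I$), fair traces (infinite, visiting $F$ infinitely often), and the language (infinite words with an initial fair trace) are as usual. Direct trace inclusion: $p\subseteq^{\mathrm{di}}q$ iff for every infinite word $w=\sigma_0\sigma_1\cdots$ and every infinite trace $p=p_0\xrightarrow{\sigma_0}p_1\xrightarrow{\sigma_1}\cdots$ there is an infinite trace $q=q_0\xrightarrow{\sigma_0}q_1\xrightarrow{\sigma_1}\cdots$ with $p_i\in F\Rightarrow q_i\in F$ for all $i$. Its strict part: $p\subset^{\mathrm{di}}q$ iff $p\subseteq^{\mathrm{di}}q$ and not $q\subseteq^{\mathrm{di}}p$. For $P\subseteq\delta\times\delta$, $\mathrm{Prune}(\mathcal A,P)=(\Sigma,Q,I,F,\delta')$ with $\delta'=\{t\in\delta:\nexists t'\in\delta,\ (t,t')\in P\}$ (all dominated transitions are removed simultaneously). For $R_b,R_f\subseteq Q\times Q$, $P(R_b,R_f)=\{((p,\sigma,r),(p',\sigma,r'))\in\delta\times\delta: p\,R_b\,p',\ r\,R_f\,r'\}$; $\mathrm{id}$ is the identity relation.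 $P$ is good for pruning if the pruned automaton has the same language as $\mathcal A$. *)

(* Defs.v *)
From mathcomp Require Import all_boot.
Set Implicit Arguments. Unset Strict Implicit. Unset Printing Implicit Defensive.

Definition trans_rel (Sigma Q : Type) := Q -> Sigma -> Q -> Prop.

Definition transition (Sigma Q : Type) := (Q * Sigma * Q)%type.

Record NBA (Sigma Q : finType) := mkNBA {
  init : {set Q};
  fin  : {set Q};
  delta : trans_rel Sigma Q
}.

Definition forward_complete (Sigma Q : Type) (d : trans_rel Sigma Q) :=
  forall (p : Q) (a : Sigma), exists r, d p a r.
Definition backward_complete (Sigma Q : Type) (d : trans_rel Sigma Q) :=
  forall (r : Q) (a : Sigma), exists p, d p a r.

Definition word (Sigma : Type) := nat -> Sigma.
Definition is_trace (Sigma Q : Type) (d : trans_rel Sigma Q)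
  (w : word Sigma) (r : nat -> Q) := forall i, d (r i) (w i) (r i.+1).

Definition fair (Q : finType) (F : {set Q}) (r : nat -> Q) :=
  forall n, exists m, n <= m /\ r m \in F.

Definition accepts (Sigma Q : finType) (A : NBA Sigma Q) (w : word Sigma) :=
  exists r : nat -> Q, is_trace (delta A) w r /\ r 0 \in init A /\ fair (fin A) r.

Definition same_language (Sigma Q : finType) (A B : NBA Sigma Q) :=
  forall w : word Sigma, accepts A w <-> accepts B w.

Definition di_incl (Sigma Q : finType) (A : NBA Sigma Q) (p q : Q) :=
  forall (w : word Sigma) (rp : nat -> Q),
    is_trace (delta A) w rp -> rp 0 = p ->
    exists rq : nat -> Q, is_trace (delta A) w rq /\ rq 0 = q /\
      forall i, rp i \in fin A -> rq i \in fin A.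

Definition di_strict (Sigma Q : finType) (A : NBA Sigma Q) (p q : Q) :=
  di_incl A p q /\ ~ di_incl A q p.

Definition strict_partial_order (Q : Type) (R : Q -> Q -> Prop) :=
  (forall x, ~ R x x) /\ (forall x y z, R x y -> R y z -> R x z).

Definition Prune (Sigma Q : finType) (A : NBA Sigma Q)
  (P : transition Sigma Q -> transition Sigma Q -> Prop) : NBA Sigma Q :=
  mkNBA (init A) (fin A)
    (fun p a r => delta A p a r /\
       ~ (exists p' a' r', delta A p' a' r' /\ P (p, a, r) (p', a', r'))).

Definition Pdom (Sigma Q : finType) (A : NBA Sigma Q) (Rb Rf : Q -> Q -> Prop)
  (t t' : transition Sigma Q) : Prop :=
  let: (p, a, r) := t in let: (p', a', r') := t' in
  delta A p a r /\ delta A p' a' r' /\ a = a' /\ Rb p p' /\ Rf r r'.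

Definition idrel (Q : Type) (x y : Q) : Prop := x = y.

Definition good_for_pruning (Sigma Q : finType) (A : NBA Sigma Q)
  (P : transition Sigma Q -> transition Sigma Q -> Prop) :=
  same_language (Prune A P) A.

(* Main.v *)
Require Import Defs.
From mathcomp Require Import all_boot.
From mathcomp Require Import zify.
From Stdlib Require Import ClassicalEpsilon.
Set Implicit Arguments. Unset Strict Implicit. Unset Printing Implicit Defensive.

Definition pb (P : Prop) : bool := if excluded_middle_informative P then true else false.
Lemma pbP (P : Prop) : pb P = true <-> P.
Proof. rewrite /pb; case: excluded_middle_informative => //= h; split=> //. Qed.

Section Main.
Variables (Sigma Q : finType) (A : NBA Sigma Q) (R : Q -> Q -> Prop).
Hypothesis Rspo : strict_partial_order R.
Hypothesis Rdi : forall p q, R p q -> di_incl A p q.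

Lemma max_ex (S : pred Q) : forall n x,
  #|[set z | S z && pb (R x z)]| < n -> S x ->
  exists y, S y /\ (y = x \/ R x y) /\ forall z, S z -> ~ R y z.
Proof.
elim=> [//|n IH] x hc hx.
case: (classic (exists z, S z /\ R x z)) => [[z [hz hxz]]|hno]; last first.
  by exists x; split=> //; split; [left|move=> z hz hr; apply: hno; exists z].
have hlt : #|[set z0 | S z0 && pb (R z z0)]| < #|[set z0 | S z0 && pb (R x z0)]|.
  apply: proper_card; apply/properP; split.
    apply/subsetP=> u; rewrite !inE => /andP [-> /pbP h]; apply/pbP.
    exact: (proj2 Rspo) hxz h.
  exists z; rewrite !inE hz /=; first by apply/pbP.
  apply/negP => /pbP; exact: (proj1 Rspo).
have [y [hy [hzy hmax]]] := IH z (leq_trans hlt hc) hz.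
exists y; split=> //; split=> //; right.
case: hzy => [->//|h]; exact: (proj2 Rspo) hxz h.
Qed.

Definition Pd := Prune A (Pdom A (@idrel Q) R).

Lemma step_ex (w : word Sigma) (k : nat) (rho : nat -> Q) :
  exists rho', is_trace (delta A) w rho ->
    [/\ is_trace (delta A) w rho', (forall i, i <= k -> rho' i = rho i),
        delta Pd (rho' k) (w k) (rho' k.+1) &
        (forall i, rho i \in fin A -> rho' i \in fin A)].
Proof.
case: (classic (is_trace (delta A) w rho)) => htr; last by exists rho.
case: (classic (exists r', delta A (rho k) (w k) r' /\ R (rho k.+1) r')) => [[r' [hd hr]]|hno].
  have [y [hy [hr'y hmax]]] := @max_ex (fun q => pb (delta A (rho k) (w k) q))
     #|Q|.+1 r' (max_card _) (proj2 (pbP _) hd).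
  have hry : R (rho k.+1) y by case: hr'y => [->//|h]; exact: (proj2 Rspo) hr h.
  have [rq [htq [hq0 hqf]]] := @Rdi _ _ hry (fun j => w (j + k.+1)) (fun j => rho (j + k.+1))
      (fun j => htr (j + k.+1)) erefl.
  exists (fun i => if i <= k then rho i else rq (i - k.+1)) => _; split.
  - move=> i /=; case: (ltngtP i k) => hik.
    + exact: htr.
      have -> : i.+1 - k.+1 = (i - k.+1).+1 by lia.
      have := htq (i - k.+1); rewrite /=.
      by have -> : i - k.+1 + k.+1 = i by lia.
    + subst i; rewrite subnn hq0. by apply/pbP.
  - by move=> i ->.
  - rewrite leqnn ltnn subnn hq0; split; first by apply/pbP.
    move=> [p' [a' [r'' [hd' /= [_ [_ [ha [hp hR]]]]]]]].
    rewrite /idrel in hp; subst a' p'.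
    apply: (hmax r'') hR; by apply/pbP.
  - move=> i hi; case: ifP => // hik.
    apply: (hqf (i - k.+1)) => /=.
    by have -> : i - k.+1 + k.+1 = i by lia.
exists rho => _; split=> //.
split; first exact: htr.
move=> [p' [a' [r'' [hd' /= [_ [_ [ha [hp hR]]]]]]]].
rewrite /idrel in hp; subst a' p'. by apply: hno; exists r''.
Qed.

Lemma lang_incl (w : word Sigma) : accepts A w -> accepts Pd w.
Proof.
move=> [r [htr [hi hf]]].
pose f k rho := proj1_sig (constructive_indefinite_description _ (step_ex w k rho)).
have fP k rho := proj2_sig (constructive_indefinite_description _ (step_ex w k rho)).
pose seqr := fix g (k : nat) := if k is k'.+1 then f k' (g k') else r.
have htrk : forall k, is_trace (delta A) w (seqr k).
  elim=> [//|k IH]; by case: (fP k (seqr k) IH).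
have hstep : forall k, seqr k.+1 = f k (seqr k) by [].
have hkeep : forall k i, i <= k -> seqr k.+1 i = seqr k i.
  by move=> k i hik; rewrite hstep; case: (fP k (seqr k) (htrk k)) => _ h _ _; exact: h.
have hstable : forall d i, seqr (i + d) i = seqr i i.
  move=> d i; elim: d => [|d IH]; first by rewrite addn0.
  by rewrite addnS hkeep ?leq_addr.
have hfin : forall k i, r i \in fin A -> seqr k i \in fin A.
  elim=> [//|k IH] i hri; rewrite hstep.
  by case: (fP k (seqr k) (htrk k)) => _ _ _ h; apply: h; apply: IH.
exists (fun i => seqr i i); split; [|split].
- move=> i /=.
  have -> : seqr i i = seqr i.+1 i by rewrite -(hstable 1 i) addn1.
  rewrite hstep; by case: (fP i (seqr i) (htrk i)).
- by [].
- move=> n; have [m [hm hmf]] := hf n; exists m; split=> //; exact: hfin.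
Qed.

End Main.

Lemma di_incl_trans (Sigma Q : finType) (A : NBA Sigma Q) x y z :
  di_incl A x y -> di_incl A y z -> di_incl A x z.
Proof.
move=> h1 h2 w rp htr h0.
have [rq [htq [hq0 hqf]]] := h1 w rp htr h0.
have [rs [hts [hs0 hsf]]] := h2 w rq htq hq0.
exists rs; split=> //; split=> // i hi; exact: hsf (hqf i hi).
Qed.

Theorem theorem5p1 (Sigma Q : finType) (A : NBA Sigma Q) :
  forward_complete (delta A) -> backward_complete (delta A) ->
  (forall R : Q -> Q -> Prop,
     strict_partial_order R ->
     (forall p q, R p q -> di_incl A p q) ->
     good_for_pruning A (Pdom A (@idrel Q) R))
  /\ good_for_pruning A (Pdom A (@idrel Q) (di_strict A)).
Proof.
move=> _ _.
have gen : forall R : Q -> Q -> Prop, strict_partial_order R ->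
     (forall p q, R p q -> di_incl A p q) -> good_for_pruning A (Pdom A (@idrel Q) R).
  move=> R hR hdi w; split; last exact: (lang_incl hR hdi).
  move=> [r [htr [hi hf]]]; exists r; split=> //.
  by move=> i; case: (htr i).
split=> //; apply: gen; last by move=> p q [].
split.
- by move=> x [h1 h2].
- move=> x y z [hxy nyx] [hyz nzy]; split; first exact: di_incl_trans hxy hyz.
  move=> hzx; apply: nyx; exact: di_incl_trans hyz hzx.
Qed.
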